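(* An undirected graph $G=(V,E)$ is a Generalized Bartlett graph if and only if $G$ has a decomposable cover $\widetilde G=(V,\widetilde E)$ such that every triangle in $\widetilde E$ contains an edge from $E$; i.e., for any $u,v,w\in V$ with $\{u,v\},\{v,w\},\{u,w\}\in\widetilde E$, at least one of $\{u,v\},\{v,w\},\{u,w\}$ belongs to $E$.
   Context: A graph is decomposable if it has no induced cycle of length $\ge4$; a decomposable cover of $G=(V,E)$ is a decomposable graph $(V,\widetilde E)$ with $E\subset\widetilde E$. For an ordering $\sigma:V\to\{1,\dots,p\}$ ($p=|V|$), set $E^\sigma_0=E$ and for $i=1,\dots,p-2$, $E^\sigma_i=E^\sigma_{i-1}\cup\{\{u,v\}:u\ne v,\sigma(u)>i,\sigma(v)>i,\{u,\sigma^{-1}(i)\},\{v,\sigma^{-1}(i)\}\in E^\sigma_{i-1}\}$; $D^\sigma(E)=E^\sigma_{p-2}$. $G$ is a Generalized Bartlett graph if there exists an ordering $\sigma$ such that there are no $u,v,w\in V$ with $\{u,v\},\{v,w\},\{u,w\}\notin E$ but $\{u,v\},\{v,w\},\{u,w\}\in D^\sigma(E)$. *)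

(* Defs.v *)
From mathcomp Require Import all_boot.
Set Implicit Arguments. Unset Strict Implicit. Unset Printing Implicit Defensive.

(* A simple graph on a finite vertex set V is a symmetric irreflexive
   relation e : rel V; {u,v} is an edge iff e u v. *)

Definition induced_cycle (V : finType) (e : rel V) (n : nat) (f : 'I_n -> V) :=
  injective f /\
  forall i j : 'I_n,
    e (f i) (f j) = (val j == (val i).+1 %% n) || (val i == (val j).+1 %% n).

Definition decomposable (V : finType) (e : rel V) :=
  forall (n : nat) (f : 'I_n -> V), 4 <= n -> ~ induced_cycle e f.

(* An ordering sigma : V -> {0,..,p-1} (0-based, injective hence bijective).
   Paper's step i (1-based, eliminating sigma^{-1}(i)) is step k = i-1 here:
   add {u,v}, u <> v, both of rank > k, both adjacent to the vertex of rank k. *)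
Definition elim_step (V : finType) (sigma : V -> 'I_#|V|) (k : nat) (e : rel V)
  : rel V :=
  fun u v => e u v ||
    [&& u != v, k < sigma u, k < sigma v &
        [exists w, [&& val (sigma w) == k, e u w & e v w]]].

(* D^sigma(E) = E^sigma_{p-2}: apply steps k = 0, ..., p-3. *)
Definition Dsigma (V : finType) (sigma : V -> 'I_#|V|) (e : rel V) : rel V :=
  iteri (#|V| - 2) (elim_step sigma) e.

Definition generalized_bartlett (V : finType) (e : rel V) :=
  exists sigma : V -> 'I_#|V|, injective sigma /\
    forall u v w : V,
      ~ ([&& ~~ e u v, ~~ e v w & ~~ e u w] /\
         [&& Dsigma sigma e u v, Dsigma sigma e v w & Dsigma sigma e u w]).

(* Main.v *)
Require Import Defs.
From mathcomp Require Import all_boot zify.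
Set Implicit Arguments. Unset Strict Implicit. Unset Printing Implicit Defensive.

Lemma G_sym (V : finType) (sigma : V -> 'I_#|V|) (e : rel V) m :
  symmetric e -> symmetric (iteri m (elim_step sigma) e).
Proof.
move=> se; elim: m => [|m IH] //= u v; rewrite /elim_step IH.
rewrite [u == v]eq_sym; case: (v == u) => //=; rewrite andbCA; congr (_ || (_ && _)).
idtac.
congr (_ && _); apply: eq_existsb => w /=; congr (_ && _); exact: andbC.
Qed.

Lemma G_irr (V : finType) (sigma : V -> 'I_#|V|) (e : rel V) m :
  irreflexive e -> irreflexive (iteri m (elim_step sigma) e).
Proof.
move=> ie; elim: m => [|m IH] //= u; by rewrite /elim_step IH eqxx.
Qed.

Lemma G_mono (V : finType) (sigma : V -> 'I_#|V|) (e : rel V) m m' u v :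
  m <= m' -> iteri m (elim_step sigma) e u v -> iteri m' (elim_step sigma) e u v.
Proof.
move=> le; elim: m' le => [|m' IH]; first by rewrite leqn0 => /eqP->.
rewrite leq_eqVlt => /orP[/eqP->//|]; rewrite ltnS => /IH H /H.
by rewrite /= /elim_step => ->.
Qed.

Lemma G_early (V : finType) (sigma : V -> 'I_#|V|) (e : rel V) m u v :
  iteri m (elim_step sigma) e u v ->
  iteri (minn m (sigma u)) (elim_step sigma) e u v.
Proof.
elim: m => [|m IH]; first by rewrite min0n.
rewrite /= {1}/elim_step => /orP[/IH H|].
  apply: G_mono H; rewrite leq_min geq_minr andbT; exact: leq_trans (geq_minl _ _) (leqnSn _).
move=> H; have lt : m < sigma u by case/and4P: H.
have ->: minn m.+1 (sigma u) = m.+1 by apply/minn_idPl.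
by apply/orP; right.
Qed.

Lemma modn_lt2 n x : 0 < n -> x < n + n -> x %% n = (if x < n then x else x - n).
Proof.
move=> n0 h; case: ltnP => h2; first by rewrite modn_small.
by rewrite -{1}(subnK h2) modnDr modn_small //; lia.
Qed.

Lemma cycle_nbrs (V : finType) (e : rel V) n (f : 'I_n -> V) (i : 'I_n) :
  4 <= n -> induced_cycle e f ->
  exists j1 j2 : 'I_n, [/\ e (f i) (f j1), e (f i) (f j2), ~~ e (f j1) (f j2)
     & [&& j1 != i, j2 != i & j1 != j2]].
Proof.
move=> n4 [finj fe].
have n0 : 0 < n by lia.
have hi := ltn_ord i.
exists (Ordinal (ltn_pmod i.+1 n0)), (Ordinal (ltn_pmod (i + n.-1) n0)).
rewrite !fe /= -!val_eqE /=.
move: (val i) hi => k hk.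
have m1 : forall x, x < n -> x %% n = x by move=> x; exact: modn_small.
have [k0|kn] := eqVneq k 0.
  subst k; rewrite add0n.
  have e1 : 1 %% n = 1 by apply: m1; lia.
  have e2 : 2 %% n = 2 by apply: m1; lia.
  have e3 : n.-1 %% n = n.-1 by apply: m1; lia.
  have e4 : n.-1.+1 %% n = 0 by rewrite prednK ?modnn.
  rewrite e1 e2 e3 e4.
  by rewrite /=; split; lia.
have [kl|kl] := eqVneq k n.-1.
  subst k.
  have f1 : n.-1.+1 %% n = 0 by rewrite prednK ?modnn.
  have f2 : 1 %% n = 1 by apply: m1; lia.
  have f3 : (n.-1 + n.-1) %% n = n.-2.
    have -> : n.-1 + n.-1 = n + (n.-2) by lia.
    rewrite modnDl; apply: m1; lia.
  have f4 : n.-2.+1 %% n = n.-1 by rewrite m1; lia.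
  have f5 : n.-1 %% n = n.-1 by apply: m1; lia.
  rewrite f1 f2 f3 f4 ?f5.
  by rewrite /=; split; lia.
have g1 : (k + n.-1) %% n = k.-1.
  have -> : k + n.-1 = n + k.-1 by lia.
  rewrite modnDl; apply: m1; lia.
have g2 : k.+1 %% n = k.+1 by apply: m1; lia.
have g3 : k.-1.+1 %% n = k by rewrite m1; lia.
rewrite g1 g2 g3.
have [k2|k2] := eqVneq k.+2 n.
  rewrite k2 modnn.
  by rewrite /=; split; lia.
have g4 : k.+2 %% n = k.+2 by apply: m1; lia.
rewrite g4.
by rewrite /=; split; lia.
Qed.

Lemma Dsigma_dec (V : finType) (sigma : V -> 'I_#|V|) (e : rel V) :
  injective sigma -> symmetric e -> irreflexive e -> decomposable (Dsigma sigma e).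
Proof.
move=> sinj se ie n f n4 ic.
have n0 : 0 < n by lia.
pose i0 : 'I_n := Ordinal n0.
case: (arg_minnP (fun i => nat_of_ord (sigma (f i))) (erefl true : predT i0)) => i _ imin.
have [finj _] := ic.
have [j1 [j2 [h1 h2 h3 /and3P [d1 d2 d3]]]] := cycle_nbrs i n4 ic.
set D := Dsigma sigma e in h1 h2 h3.
set k := nat_of_ord (sigma (f i)) in imin.
have rk : forall j, j != i -> k < sigma (f j).
  move=> j ji; rewrite ltn_neqAle imin // andbT.
  apply/negP => /eqP /val_inj /sinj /finj /eqP; by rewrite eq_sym (negbTE ji).
have r1 := rk _ d1; have r2 := rk _ d2.
have r12 : nat_of_ord (sigma (f j1)) != nat_of_ord (sigma (f j2)).
  apply/negP => /eqP /val_inj /sinj /finj /eqP; by rewrite (negbTE d3).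
have b1 := ltn_ord (sigma (f j1)); have b2 := ltn_ord (sigma (f j2)).
have kp : k.+1 <= #|V| - 2 by lia.
have g1 := G_early h1; have g2 := G_early h2.
have mk : minn (#|V| - 2) (sigma (f i)) = k by rewrite /k; lia.
rewrite mk in g1 g2.
rewrite (G_sym _ _ se) in g1; rewrite (G_sym _ _ se) in g2.
have : iteri k.+1 (elim_step sigma) e (f j1) (f j2).
  rewrite /= /elim_step; apply/orP; right; apply/and4P; split => //.
    apply/negP => /eqP /finj /eqP; by rewrite (negbTE d3).
  by apply/existsP; exists (f i); rewrite g1 g2 eqxx.
by move/(G_mono kp); rewrite -/(Dsigma sigma e) -/D (negbTE h3).
Qed.

Lemma modS_lt n x : x < n -> x.+1 %% n = if x.+1 == n then 0 else x.+1.
Proof.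
move=> h; case: eqP => [->|ne]; first by rewrite modnn.
by rewrite modn_small //; lia.
Qed.

Lemma seq_cycle (V : finType) (Et : rel V) (a : V) (t : seq V) :
  symmetric Et -> irreflexive Et -> decomposable Et -> uniq t -> 4 <= size t ->
  (forall i j, i < j -> j < size t ->
     Et (nth a t i) (nth a t j) = (j == i.+1) || ((i == 0) && (j == (size t).-1))) ->
  False.
Proof.
move=> se ie dec ut n4 H.
apply: (dec (size t) (fun i => nth a t i) n4); split.
  by move=> i j /eqP; rewrite nth_uniq // => /eqP /val_inj.
case=> i hi; case=> j hj /=.
rewrite !modS_lt //.
case: (ltngtP i j) => ij.
- rewrite H //; case: (j.+1 =P size t) => e1; case: (i.+1 =P size t) => e2; apply/idP/idP; lia.
- rewrite se H //; case: (j.+1 =P size t) => e1; case: (i.+1 =P size t) => e2; apply/idP/idP; lia.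
- subst j.
  rewrite ie; case: (i.+1 =P size t) => e1; apply/idP/idP; lia.
Qed.

From Stdlib Require Import Classical.

Lemma cyc_short (V : finType) (Et : rel V) (a : V) :
  symmetric Et -> irreflexive Et -> decomposable Et ->
  forall r : seq V, uniq (a :: r) -> 2 <= size r ->
  (forall i, i.+1 < size r -> Et (nth a r i) (nth a r i.+1)) ->
  Et a (nth a r 0) -> Et a (nth a r (size r).-1) ->
  (forall i, 0 < i -> i < (size r).-1 -> ~~ Et a (nth a r i)) ->
  Et (nth a r 0) (nth a r (size r).-1).
Proof.
move=> se ie dec r.
have [m] := ubnP (size r); elim: m r => [//|m IH] r szm ur s2 adj ah al int.
have [s2'|s3] := eqVneq (size r) 2.
  by rewrite s2'; apply: adj; rewrite s2'.
have {s2} s3 : 3 <= size r by lia.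
case: (classic (exists i j, [/\ i.+1 < j, j < size r,
          ~~ ((i == 0) && (j == (size r).-1)) & Et (nth a r i) (nth a r j)])).
  case=> i [j [ij jr nij eij]].
  pose r' := take i.+1 r ++ drop j r.
  have sz' : size r' = i.+1 + (size r - j).
    by rewrite /r' size_cat size_take size_drop; case: ltnP; lia.
  have nth' : forall k, nth a r' k =
       if k < i.+1 then nth a r k else nth a r (j + (k - i.+1)).
    move=> k; rewrite /r' nth_cat size_take.
    have -> : (if i.+1 < size r then i.+1 else size r) = i.+1 by case: ltnP; lia.
    by case: ltnP => hk; [rewrite nth_take | rewrite nth_drop].
  have sub' : subseq r' r.
    rewrite -[X in subseq _ X](cat_take_drop i.+1 r); apply: cat_subseq => //.
    have -> : drop j r = drop (j - i.+1) (drop i.+1 r) by rewrite drop_drop; congr drop; lia.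
    exact: drop_subseq.
  have IH' := IH r'.
  have e0 : nth a r' 0 = nth a r 0 by rewrite nth'.
  have el : nth a r' (size r').-1 = nth a r (size r).-1.
    by rewrite nth' sz'; case: ltnP => h; [lia|congr nth; lia].
  rewrite -e0 -el; apply: IH'.
  - rewrite sz'; lia.
  - move: ur; rewrite /= => /andP [an ur]; apply/andP; split.
      by apply: contra an; apply: (mem_subseq sub').
    exact: subseq_uniq sub' ur.
  - rewrite sz'; lia.
  - move=> k hk; rewrite !nth'.
    case: (ltnP k.+1 i.+1) => h1.
      have -> : k < i.+1 by lia.
      apply: adj; lia.
    case: (ltnP k i.+1) => h2.
      have -> : k = i by lia.
      by rewrite subnn addn0.
    have -> : j + (k.+1 - i.+1) = (j + (k - i.+1)).+1 by lia.
    apply: adj; rewrite sz' in hk; lia.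
  - by rewrite e0.
  - by rewrite el.
  - move=> k k0 kl; rewrite nth'; rewrite sz' in kl.
    case: ltnP => h; apply: int; lia.
move=> noch.
have noch' : forall i j, i.+1 < j -> j < size r ->
    ~~ ((i == 0) && (j == (size r).-1)) -> ~~ Et (nth a r i) (nth a r j).
  move=> i j h1 h2 h3; apply/negP => h4; apply: noch; exists i, j; by split.
case: (boolP (Et (nth a r 0) (nth a r (size r).-1))) => // hl.
exfalso; apply: (@seq_cycle V Et a (a :: r) se ie dec ur); first by rewrite /=; lia.
move=> i j ij jr; rewrite /= in jr.
case: i ij => [|i] ij /=.
  case: j ij jr => [//|j] _ jr /=.
  have [->|j0] := eqVneq j 0; first by rewrite ah.
  have [->|jl] := eqVneq j (size r).-1.
    by rewrite al; case: (size r) s3 => // n _; rewrite eqxx orbT.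
  rewrite (negbTE (int j _ _)); try lia.
case: j ij jr => [//|j] ij jr /=.
have [->|jn] := eqVneq j i.+1.
  by rewrite adj ?eqxx //; lia.
have [[-> ->]|nn] := (classic (i = 0 /\ j = (size r).-1)).
  rewrite (negbTE hl); apply/esym/negbTE; lia.
rewrite (negbTE (noch' _ _ _ _ _)); try lia.
Qed.

Definition simpl_in (V : finType) (Et : rel V) (S : {set V}) (x : V) :=
  forall y z, y \in S -> z \in S -> Et x y -> Et x z -> y != z -> Et y z.

Lemma path_mem (V : finType) (R : rel V) (M : {set V}) x p :
  (forall y z, R y z -> z \in M) -> path R x p -> forall y, y \in p -> y \in M.
Proof.
move=> hR; elim: p x => [//|z p IH] x /= /andP [rz pz] y.
rewrite in_cons => /orP [/eqP ->|]; [exact: hR _ _ rz | exact: IH pz y].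
Qed.

Lemma dirac (V : finType) (Et : rel V) :
  symmetric Et -> irreflexive Et -> decomposable Et ->
  forall (S : {set V}) a u, a \in S -> u \in S -> u != a -> ~~ Et a u ->
  exists x, [/\ x \in S, x != a, ~~ Et a x & simpl_in Et S x].
Proof.
move=> se ie dec S.
have [m] := ubnP #|S|; elim: m S => [//|m IH] S szS a u aS uS ua nau.
pose M := [set y in S | (y != a) && ~~ Et a y].
pose R := [rel y z | [&& y \in M, z \in M & Et y z]].
pose C := [set y | connect R u y].
have uM : u \in M by rewrite inE uS ua.
have hR : forall y z, R y z -> z \in M by move=> y z /and3P [].
have CM : forall y, y \in C -> y \in M.
  move=> y; rewrite inE => /connectP [p pp ->].
  case: (lastP p) pp => [_|q l pp]; first exact: uM.
  rewrite last_rcons; apply: (path_mem hR pp); by rewrite mem_rcons inE eqxx.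
have Mdef : forall y, y \in M -> [/\ y \in S, y != a & ~~ Et a y].
  by move=> y; rewrite inE => /and3P [].
have Cclos : forall c y, c \in C -> y \in M -> Et c y -> y \in C.
  move=> c y cC yM cy; move: (cC); rewrite !inE => cc.
  apply: (connect_trans cc); apply: connect1.
  by rewrite /= yM cy (CM c cC).
pose N := [set y in S | (y \notin C) && [exists c in C, Et y c]].
pose W := C :|: N.
have WS : W \subset S.
  apply/subsetP => y; rewrite in_setU => /orP [/CM /Mdef [] //|]; by rewrite inE => /andP [].
have aW : a \notin W.
  rewrite in_setU negb_or; apply/andP; split.
    apply/negP => /CM /Mdef [_]; by rewrite eqxx.
  rewrite inE negb_and; apply/orP; right; rewrite negb_and; apply/orP; right.
  apply/negP => /existsP [c /andP [cC ac]].
  by have [_ _] := Mdef c (CM c cC); rewrite ac.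
have szW : #|W| < m.
  have : #|W| < #|S| by apply: proper_card; apply/properP; split => //; exists a.
  lia.
have NaAdj : forall y, y \in N -> Et a y.
  move=> y; rewrite inE => /and3P [yS yC /existsP [c /andP [cC yc]]].
  apply/negPn/negP => nay.
  have [cS ca nac] := Mdef c (CM c cC).
  have ya : y != a by apply/negP => /eqP ya; subst y; rewrite yc in nac.
  have yM : y \in M by rewrite inE yS ya nay.
  have yC2 : y \in C by apply: (Cclos c y cC yM); rewrite se.
  by rewrite yC2 in yC.
have Nclique : forall y z, y \in N -> z \in N -> y != z -> Et y z.
  move=> y z yN zN yz; have ay := NaAdj y yN; have az := NaAdj z zN.
  apply/negPn/negP => nyz.
  move: yN zN; rewrite !inE => /and3P [yS yC /existsP [c1 /andP [c1C yc1]]].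
  move=> /and3P [zS zC /existsP [c2 /andP [c2C zc2]]].
  have sR : symmetric R by move=> p q; rewrite /= se andbCA andbA.
  have cc : connect R c1 c2.
    move: (c1C) (c2C); rewrite !inE => h1 h2.
    by apply: connect_trans h2; rewrite (sym_connect_sym sR).
  case/connectP: cc => p pp lp.
  move: lp; case: (shortenP pp) => p' pp' up' _ lp.
  have c1M : c1 \in M by apply: CM.
  have inM : forall w, w \in c1 :: p' -> w \in M.
    move=> w; rewrite in_cons => /orP [/eqP -> //|]; exact: path_mem hR pp' w.
  have na : forall w, w \in c1 :: p' -> ~~ Et a w /\ w != a.
    by move=> w /inM /Mdef [].
  have notin : forall w, Et a w -> w \notin c1 :: p'.
    by move=> w aw; apply/negP => /na [/negP].
  have ne : forall w, Et a w -> a != w.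
    by move=> w aw; apply/negP => /eqP h; rewrite -h ie in aw.
  have subR : subrel R Et by move=> p1 q1 /and3P [].
  have P : path Et y (rcons (c1 :: p') z).
    by rewrite rcons_path /= yc1 (sub_path subR pp') /= -lp se zc2.
  move/(pathP a): P => P.
  set s := c1 :: p' in P na notin up' *; clearbody s.
  have := @cyc_short V Et a se ie dec (y :: rcons s z).
  rewrite !nth_last /= !last_rcons.
  move=> H; move/negP: nyz; apply; apply: H => //.
  - have as' : a \notin s by apply/negP => /na [_]; rewrite eqxx.
    rewrite /= rcons_uniq !mem_rcons !in_cons (negbTE (ne y ay)).
    by rewrite mem_rcons in_cons (negbTE (ne z az)) (negbTE as') (negbTE yz) (negbTE (notin y ay)) (negbTE (notin z az)) up'.
  - by rewrite size_rcons.
  - move=> i i0 hi; rewrite /= size_rcons /= in hi.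
    case: i i0 hi => [//|i] _ hi /=.
    rewrite nth_rcons; have -> : i < size s by [].
    by case: (na (nth a s i)) => //; apply: mem_nth.
have fin : forall c, c \in C -> simpl_in Et W c ->
    exists x, [/\ x \in S, x != a, ~~ Et a x & simpl_in Et S x].
  move=> c cC sc; have [cS ca nac] := Mdef c (CM c cC).
  exists c; split => // y z yS zS cy cz yz.
  have inW : forall y, y \in S -> Et c y -> y \in W.
    move=> w wS cw; rewrite inE; case: (boolP (w \in C)) => //= wC.
    rewrite inE wS wC /=; apply/existsP; exists c; by rewrite cC se.
  by apply: sc => //; apply: inW.
case: (classic (exists p q, [/\ p \in W, q \in W, q != p & ~~ Et p q])).
  case=> p [q [pW qW qp npq]].
  have [x1 [x1W x1p npx1 sx1]] := IH W szW p q pW qW qp npq.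
  case: (boolP (x1 \in C)) => x1C; first exact: fin x1C sx1.
  have x1N : x1 \in N by move: x1W; rewrite inE (negbTE x1C).
  have px1 : p != x1 by rewrite eq_sym.
  have nx1p : ~~ Et x1 p by rewrite se.
  have [x2 [x2W x2x1 nx1x2 sx2]] := IH W szW x1 p x1W pW px1 nx1p.
  case: (boolP (x2 \in C)) => x2C; first exact: fin x2C sx2.
  have x2N : x2 \in N by move: x2W; rewrite inE (negbTE x2C).
  by rewrite (Nclique x1 x2 x1N x2N) // eq_sym in nx1x2.
move=> nW; apply: (fin u); first by rewrite inE connect0.
move=> y z yW zW _ _ yz; apply/negPn/negP => nyz; apply: nW.
exists y, z; split => //; by rewrite eq_sym.
Qed.

Lemma simp_exists (V : finType) (Et : rel V) :
  symmetric Et -> irreflexive Et -> decomposable Et ->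
  forall (S : {set V}) a, a \in S -> exists x, x \in S /\ simpl_in Et S x.
Proof.
move=> se ie dec S.
have [m] := ubnP #|S|; elim: m S => [//|m IH] S szS a aS.
case: (classic (exists u, [/\ u \in S, u != a & ~~ Et a u])).
  case=> u [uS ua nau]; have [x [xS _ _ sx]] := dirac se ie dec aS uS ua nau.
  by exists x.
move=> univ.
have univ' : forall z, z \in S -> z != a -> Et a z.
  move=> z zS za; apply/negPn/negP => naz; apply: univ; by exists z.
have ext : forall x, simpl_in Et (S :\ a) x -> simpl_in Et S x.
  move=> x sx y z yS zS xy xz yz.
  have [ya|ya] := eqVneq y a.
    by subst y; apply: univ' => //; rewrite eq_sym.
  have [za|za] := eqVneq z a.
    by subst z; rewrite se; apply: univ'.
  by apply: sx; rewrite // !inE ?ya ?za.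
case: (set_0Vmem (S :\ a)) => [S0|[b bS]].
  exists a; split => // y z yS zS _ _ yz.
  have [ya|ya] := eqVneq y a; last first.
    have : y \in S :\ a by rewrite !inE ya yS.
    by rewrite S0 inE.
  have [za|za] := eqVneq z a; last first.
    have : z \in S :\ a by rewrite !inE za zS.
    by rewrite S0 inE.
  by rewrite ya za eqxx in yz.
have sz' : #|S :\ a| < m.
  have := cardsD1 a S; rewrite aS; lia.
have [x [xS sx]] := IH _ sz' b bS.
exists x; split; last exact: ext.
by move: xS; rewrite inE => /andP [].
Qed.

Lemma simpl_eq (V : finType) (Et : rel V) (S1 S2 : {set V}) x :
  S1 = S2 -> simpl_in Et S1 x -> simpl_in Et S2 x.
Proof. by move=> ->. Qed.

Lemma peo (V : finType) (Et : rel V) :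
  symmetric Et -> irreflexive Et -> decomposable Et ->
  forall S : {set V}, exists s : seq V, [/\ uniq s, s =i S &
    forall x, x \in s -> simpl_in Et [set y in drop (index x s) s] x].
Proof.
move=> se ie dec S.
have [m] := ubnP #|S|; elim: m S => [//|m IH] S szS.
case: (set_0Vmem S) => [->|[a aS]].
  by exists [::]; split => // y; rewrite inE.
have [x [xS sx]] := simp_exists se ie dec aS.
have sz' : #|S :\ x| < m by have := cardsD1 x S; rewrite xS; lia.
have [s [us si sp]] := IH _ sz'.
exists (x :: s); split.
- by rewrite /= us andbT si !inE eqxx.
- move=> y; rewrite in_cons si !inE; case: eqP => [->|] //=.
- move=> y; rewrite in_cons; case: eqP => [-> _|yx ys] /=.
    rewrite eqxx drop0; apply: (simpl_eq _ sx); apply/setP => z.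
    rewrite !inE si !inE; case: eqP => [->|] //=.
  have -> : (x == y) = false by apply/eqP => h; apply: yx.
  exact: sp.
Qed.

Lemma mem_drop_idx (T : eqType) (s : seq T) k u :
  u \in s -> k <= index u s -> u \in drop k s.
Proof.
move=> us ku; rewrite -(nth_index u us).
have -> : index u s = k + (index u s - k) by rewrite subnKC.
rewrite -nth_drop; apply: mem_nth; rewrite size_drop.
have := us; rewrite -index_mem; lia.
Qed.

Theorem lemma2 (V : finType) (E : rel V)
    (Esym : symmetric E) (Eirr : irreflexive E) :
  generalized_bartlett E <->
  exists Et : rel V,
    [/\ symmetric Et, irreflexive Et, subrel E Et, decomposable Et &
        forall u v w : V, Et u v -> Et v w -> Et u w ->
          [|| E u v, E v w | E u w]].
Proof.
split.
- case=> sigma [sinj gb]; exists (Dsigma sigma E); split.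
  + exact: G_sym.
  + exact: G_irr.
  + move=> u v h; exact: (G_mono (m := 0) (leq0n _) h).
  + exact: Dsigma_dec.
  + move=> u v w h1 h2 h3; apply/negPn/negP => hn; apply: (gb u v w); split.
      by move: hn; rewrite !negb_or.
    by apply/and3P.
- case=> Et [se ie sub dec tri].
  have [s [us si sp]] := peo se ie dec [set: V].
  have ss : size s = #|V|.
    rewrite -(card_uniqP us); apply: eq_card => y; by rewrite si inE.
  have lt : forall x, index x s < #|V| by move=> x; rewrite -ss index_mem si inE.
  pose sigma := fun x => Ordinal (lt x).
  have sinT : forall x, x \in s by move=> x; rewrite si inE.
  exists sigma; split.
    move=> x y /(congr1 val) /= h.
    by rewrite -(nth_index x (sinT x)) h nth_index.
  have DE : forall k u v, iteri k (elim_step sigma) E u v -> Et u v.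
    elim=> [|k IH] u v /=; first exact: sub.
    rewrite {1}/elim_step => /orP [/IH //|/and4P [uv ku kv /existsP [w /and3P [wk uw vw]]]].
    have swp := sp w (sinT w).
    move: wk ku kv => /= /eqP wk ku kv.
    apply: swp; rewrite ?inE; try (apply: mem_drop_idx => //; rewrite wk; lia).
    + by rewrite se; apply: IH.
    + by rewrite se; apply: IH.
    + exact: uv.
  move=> u v w [/and3P [n1 n2 n3] /and3P [d1 d2 d3]].
  have := tri u v w (DE _ _ _ d1) (DE _ _ _ d2) (DE _ _ _ d3).
  by rewrite (negbTE n1) (negbTE n2) (negbTE n3).
Qed.
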